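(* Let $N\ge3$ and let $\varphi_1',\dots,\varphi_{N-1}'\in\mathbb R$ with $\sum_{j=1}^{N-1}\varphi_j'\equiv\pi/2\pmod{2\pi}$. Take $X_j=\sigma_x$, $X_j'=\cos\varphi_j'\sigma_x+\sin\varphi_j'\sigma_y$ for $j=1,\dots,N-1$, and $X_N=(\sigma_x-\sigma_y)/\sqrt2$, $X_N'=(\sigma_x+\sigma_y)/\sqrt2$; let $I^N_{CHSH}=\sum_{a,b\in\{0,1\}}(-1)^{ab}\mathbb A_a\otimes\mathbb B_b$. Then for every subset $K\subseteq\{1,\dots,N-1\}$ satisfying $\sum_{k\in K}\varphi_k'\equiv0\pmod\pi$, the state $\bigotimes_{k\in K}\sigma_x^{(k)}|G\rangle$ is an eigenvector of $I^N_{CHSH}$ with eigenvalue $2\sqrt2$ (in particular, for $K=\emptyset$, $I^N_{CHSH}|G\rangle=2\sqrt2|G\rangle$). Moreover, for no subset $K$ do both $K$ and its complement $\{1,\dots,N-1\}\setminus K$ satisfy this condition, so at most $2^{N-2}$ subsets $K$ satisfy it.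
   Context: $|G\rangle=\frac{1}{\sqrt2}(|0\cdots0\rangle+|1\cdots1\rangle)$ is the $N$-qubit GHZ state; $\sigma_x,\sigma_y,\sigma_z$ are Pauli matrices and $\sigma_x^{(k)}$ denotes $\sigma_x$ acting on the $k$-th qubit. $\mathbb A_0=\bigotimes_{j=1}^{N-1}X_j$, $\mathbb A_1=\bigotimes_{j=1}^{N-1}X_j'$ act on qubits $1,\dots,N-1$, and $\mathbb B_0=X_N$, $\mathbb B_1=X_N'$ act on qubit $N$. *)

(* Defs.v *)
From HB Require Import structures.
From mathcomp Require Import all_boot all_order all_algebra.
From mathcomp Require Import all_classical all_reals all_analysis.
From mathcomp Require Import complex.
Set Implicit Arguments. Unset Strict Implicit. Unset Printing Implicit Defensive.
Import Order.TTheory GRing.Theory Num.Theory.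
Local Open Scope ring_scope.

Section Defs.
Variable R : realType.

Definition cplx (x y : R) : R[i] := Complex x y.

Definition sigma_x : 'M[R[i]]_2 :=
  \matrix_(i < 2, j < 2) (if i == j then 0 else 1).
Definition sigma_y : 'M[R[i]]_2 :=
  \matrix_(i < 2, j < 2)
    (if i == j then 0 else if (val i == 0)%N then cplx 0 (-1) else cplx 0 1).
Definition sigma_z : 'M[R[i]]_2 :=
  \matrix_(i < 2, j < 2) (if i == j then (if (val i == 0)%N then 1 else -1) else 0).

Definition Xrot (phi : R) : 'M[R[i]]_2 :=
  cplx (cos phi) 0 *: sigma_x + cplx (sin phi) 0 *: sigma_y.

Definition invsqrt2 : R[i] := cplx (Num.sqrt 2)^-1 0.
Definition XN : 'M[R[i]]_2 := invsqrt2 *: (sigma_x - sigma_y).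
Definition XN' : 'M[R[i]]_2 := invsqrt2 *: (sigma_x + sigma_y).

Definition basis (N : nat) := {ffun 'I_N -> 'I_2}.
Definition state (N : nat) := basis N -> R[i].

(* tensor product of single-qubit operators M 0 (x) ... (x) M (N-1) acting on a state *)
Definition tensor_op (N : nat) (M : 'I_N -> 'M[R[i]]_2) (psi : state N) : state N :=
  fun x => \sum_(y : basis N) (\prod_(j < N) M j (x j) (y j)) * psi y.

Definition GHZ (N : nat) : state N :=
  fun x => if [forall i, x i == 0 :> 'I_2] || [forall i, x i == 1 :> 'I_2]
           then invsqrt2 else 0.

(* Qubits are indexed 0..N-1 (paper's qubit k is index k-1); qubit index N-1
   is the last qubit N.  phi' : 'I_(N.-1) -> R gives the angles of qubits 1..N-1. *)
Definition local_obs (N : nat) (phi' : 'I_N.-1 -> R) (a b : bool) (i : 'I_N)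
  : 'M[R[i]]_2 :=
  match (insub (nat_of_ord i) : option 'I_N.-1) with
  | Some j => if a then Xrot (phi' j) else sigma_x   (* A_0 = X_j, A_1 = X_j' *)
  | None => if b then XN' else XN                    (* B_0 = X_N, B_1 = X_N' *)
  end.

Definition I_CHSH (N : nat) (phi' : 'I_N.-1 -> R) (psi : state N) : state N :=
  fun x => \sum_(a : bool) \sum_(b : bool)
     (if a && b then -1 else 1) * tensor_op (local_obs phi' a b) psi x.

Definition emb (N : nat) (k : 'I_N.-1) : 'I_N := widen_ord (leq_pred N) k.

Definition flipped_GHZ (N : nat) (K : {set 'I_N.-1}) : state N :=
  tensor_op (fun i : 'I_N => if i \in [set emb k | k in K] then sigma_x else 1%:M)
            (@GHZ N).

Definition good_subset (N : nat) (phi' : 'I_N.-1 -> R) (K : {set 'I_N.-1}) : Prop :=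
  exists m : int, \sum_(k in K) phi' k = m%:~R * pi.

End Defs.

(* Main.v *)
Require Import Defs.
From HB Require Import structures.
From mathcomp Require Import all_boot all_order all_algebra.
From mathcomp Require Import all_classical all_reals all_analysis.
From mathcomp Require Import complex.
From mathcomp Require Import zify ring lra.
Import Order.TTheory GRing.Theory Num.Theory.
Local Open Scope ring_scope.

Section H.
Variable R : realType.

Definition fl (u : 'I_2) : 'I_2 := if u == 0 then 1 else 0.

Lemma I2cases (u : 'I_2) : u = 0 \/ u = 1.
Proof. by case: u => [[|[|//]]] Hu; [left|right]; apply/val_inj. Qed.

Lemma fl_neq (u v : 'I_2) : v != fl u -> v = u.
Proof. by case: (I2cases u) => ->; case: (I2cases v) => ->. Qed.

Lemma flK (u : 'I_2) : fl (fl u) = u.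
Proof. by case: (I2cases u) => ->. Qed.

Lemma tensor_perm N (M : 'I_N -> 'M[R[i]]_2) (f : 'I_N -> 'I_2 -> 'I_2) psi x :
  (forall j u v, v != f j u -> M j u v = 0) ->
  tensor_op M psi x = (\prod_j M j (x j) (f j (x j))) * psi [ffun j => f j (x j)].
Proof.
move=> H; rewrite /tensor_op (bigD1 [ffun j => f j (x j)]) //= [X in _ + X]big1 ?addr0.
  by congr (_ * _); apply: eq_bigr => j _; rewrite ffunE.
move=> y ny.
case: (pickP (fun j : 'I_N => (y : {ffun 'I_N -> 'I_2}) j != f j (x j))) => [j hj|h]; last first.
  case/eqP: ny; apply/ffunP => j; rewrite ffunE; exact/eqP/negbFE/h.
by rewrite (bigD1 j) //= H ?mul0r.
Qed.

Lemma GHZ_fl N (y : {ffun 'I_N -> 'I_2}) : GHZ R [ffun j => fl (y j)] = GHZ R y.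
Proof.
rewrite /GHZ orbC; congr (if _ then _ else _); congr orb; apply: eq_forallb => i;
  rewrite ffunE; by case: (I2cases (y i)) => ->.
Qed.

Definition ex (t : R) : R[i] := Complex (cos t) (sin t).
Lemma exD a b : ex (a + b) = ex a * ex b.
Proof. rewrite /ex cosD sinD; apply/eqP; rewrite eq_complex /= !eqxx /=. by rewrite addrC. Qed.
Lemma ex0 : ex 0 = 1.
Proof. by rewrite /ex cos0 sin0. Qed.

Lemma ex_sum I (r : seq I) (P : pred I) F :
  ex (\sum_(i <- r | P i) F i) = \prod_(i <- r | P i) ex (F i).
Proof. exact: (big_morph ex exD ex0). Qed.

Lemma Xrot_fl t u : Xrot t u (fl u) = ex (if u == 0 then - t else t).
Proof.
rewrite /Xrot /ex !mxE; case: (I2cases u) => -> /=; rewrite ?cosN ?sinN;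
 apply/eqP; rewrite eq_complex /=; apply/andP; split; apply/eqP; ring.
Qed.

Lemma sx_fl u : sigma_x R u (fl u) = 1.
Proof. by rewrite mxE; case: (I2cases u) => ->. Qed.

Lemma per_int (f : R -> R) (p : R) : periodic f p -> forall (j : int) x, f (x + j%:~R * p) = f x.
Proof.
move=> hf [k|k] x.
  by rewrite -[(Posz k)%:~R]/(k%:R) mulr_natl periodicn.
rewrite NegzE rmorphN /= mulNr -[(Posz k.+1)%:~R]/(k.+1%:R) mulr_natl.
by rewrite -[in RHS](subrK (p *+ k.+1) x) periodicn.
Qed.

Lemma flipped_E N (K : {set 'I_N.-1}) x :
  flipped_GHZ R K x =
  GHZ R [ffun j => if j \in [set emb k | k in K] then fl (x j) else x j].
Proof.
rewrite /flipped_GHZ (@tensor_perm N _ (fun j u => if j \in [set emb k | k in K] then fl u else u)).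
  rewrite big1 ?mul1r //= => j _; case: ifP => _; first exact: sx_fl.
  by rewrite mxE eqxx.
move=> j u v; case: ifP => _ h.
  by rewrite (@fl_neq u v h) mxE eqxx.
by rewrite mxE eq_sym (negbTE h).
Qed.

Lemma obs_diag N (phi' : 'I_N.-1 -> R) a b j u v :
  v != fl u -> local_obs phi' a b j u v = 0.
Proof.
move=> /(@fl_neq u v) ->; rewrite /local_obs.
case: insub => [k|]; case: a; case: b;
 rewrite /Xrot /XN /XN' !mxE eqxx ?mulr0 ?addr0 ?subr0 ?mulr0 //.
Qed.

Lemma invsqrt2_neq0 : invsqrt2 R != 0.
Proof.
rewrite /invsqrt2 /cplx eq_complex /= negb_and eqxx orbF invr_eq0 sqrtr_eq0.
by rewrite -ltNge.
Qed.

Lemma memE n (K : {set 'I_n.+1.-1}) (j : 'I_n) :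
  (widen_ord (leqnSn n) j \in [set emb k | k in K]) = (j \in K).
Proof.
apply/imsetP/idP => [[k hk /(congr1 val) /= e]|hj]; last by exists j => //; apply/val_inj.
by have -> : j = k by apply/val_inj.
Qed.

Lemma memE_max n (K : {set 'I_n.+1.-1}) :
  ((ord_max : 'I_n.+1) \in [set emb k | k in K]) = false.
Proof.
apply/imsetP => [[k _ /(congr1 val) /= e]].
by move: (ltn_ord k); rewrite -e ltnn.
Qed.


Lemma part1 n (phi' : 'I_n.+1.-1 -> R) (m : int) :
  \sum_(j < n.+1.-1) phi' j = pi / 2 + m%:~R * (2 * pi) ->
  forall K : {set 'I_n.+1.-1}, good_subset phi' K ->
   (exists x, flipped_GHZ R K x != 0) /\
   (forall x, I_CHSH phi' (flipped_GHZ R K) x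
              = cplx (2 * Num.sqrt 2) 0 * flipped_GHZ R K x).
Proof.
move=> hm K [k hk].
split.
  exists [ffun j => if j \in [set emb k | k in K] then 1 else 0].
  rewrite flipped_E /GHZ; case: ifP => [_|/negbT]; first exact: invsqrt2_neq0.
  rewrite negb_or => /andP[h _]; case/negP: h; apply/forallP => j; rewrite !ffunE.
  by case: (j \in _).
move=> x.
have hsym : flipped_GHZ R K [ffun j => fl (x j)] = flipped_GHZ R K x.
  rewrite !flipped_E -[in RHS]GHZ_fl; congr GHZ; apply/ffunP => j; rewrite !ffunE.
  by case: ifP.
have ht : forall a b, tensor_op (local_obs phi' a b) (flipped_GHZ R K) x =
    (\prod_j local_obs phi' a b j (x j) (fl (x j))) * flipped_GHZ R K x.
  move=> a b; rewrite (@tensor_perm _ _ (fun _ => fl)); last first.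
    by move=> j u v; exact: obs_diag.
  by rewrite hsym.
rewrite /I_CHSH !big_bool /= !ht.
case: (eqVneq (flipped_GHZ R K x) 0) => [->|hne]; first by rewrite !(mulr0, addr0).
rewrite !mulrA -!mulrDl; congr (_ * _).
have [c hc] : exists c : 'I_2, forall j,
    (if j \in [set emb k | k in K] then fl (x j) else x j) = c.
  move: hne; rewrite flipped_E /GHZ; case: ifP => [|_]; last by rewrite eqxx.
  by case/orP => /forallP h _; [exists 0 | exists 1] => j; move/eqP: (h j); rewrite ffunE.
have hx : forall j, x j = if j \in [set emb k | k in K] then fl c else c.
  by move=> j; rewrite -(hc j); case: (j \in _) => //=; rewrite flK.
have hP : forall a b, \prod_(j < n.+1) local_obs phi' a b j (x j) (fl (x j)) =
   (\prod_(j < n) (if a then Xrot (phi' j) else sigma_x R)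
        (x (widen_ord (leqnSn n) j)) (fl (x (widen_ord (leqnSn n) j))))
   * (if b then XN' R else XN R) c (fl c).
  move=> a b; rewrite big_ord_recr /=; congr (_ * _).
    by apply: eq_bigr => j _; rewrite /local_obs /= valK.
  by rewrite /local_obs insubN ?ltnn //= hx memE_max.
have hA0 : \prod_(j < n) sigma_x R (x (widen_ord (leqnSn n) j)) (fl (x (widen_ord (leqnSn n) j))) = 1.
  by rewrite big1 // => j _; rewrite sx_fl.
set D := \sum_(j in K) phi' j - \sum_(j in ~: K) phi' j.
have hD : D = -(pi/2) + (k - m)%:~R * (pi *+ 2).
  have e : \sum_(j < n) phi' j = \sum_(j in K) phi' j + \sum_(j in ~: K) phi' j.
    rewrite (bigID (mem K)) /=; congr (_ + _); apply: eq_bigl => j; by rewrite inE.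
  move: hm; rewrite e hk => hm; rewrite /D hk.
  have -> : \sum_(j in ~: K) phi' j = pi / 2 + m%:~R * (2 * pi) - k%:~R * pi.
    by rewrite -hm; ring.
  rewrite rmorphB /= -mulr_natl; ring.
have cD : cos D = 0 by rewrite hD (per_int _ _ (@cosD2pi R)) cosN cos_pihalf.
have sD : sin D = -1 by rewrite hD (per_int _ _ (@sinD2pi R)) sinN sin_pihalf.
have hA1 : \prod_(j < n) Xrot (phi' j) (x (widen_ord (leqnSn n) j)) (fl (x (widen_ord (leqnSn n) j)))
    = ex (if c == 0 then D else - D).
  under eq_bigr => j _ do rewrite Xrot_fl hx memE.
  rewrite -ex_sum; congr ex.
  case: (I2cases c) => -> /=.
    rewrite (bigID (mem K)) /= /D; congr (_ + _); first by apply: eq_bigr => j ->.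
    rewrite -sumrN; apply: eq_big => [j|j hj]; [by rewrite inE | by rewrite (negbTE hj)].
  rewrite (bigID (mem K)) /= /D opprB [RHS]addrC; congr (_ + _).
    rewrite -sumrN; apply: eq_bigr => j -> //.
  by apply: eq_big => [j|j hj]; [by rewrite inE | by rewrite (negbTE hj)].
rewrite !hP hA0 /= hA1.
have s2 : Num.sqrt 2 ^+ 2 = 2 :> R by rewrite sqr_sqrtr.
have s0 : Num.sqrt 2 != 0 :> R by rewrite sqrtr_eq0 -ltNge.
have si : (Num.sqrt 2)^-1 = Num.sqrt 2 / 2 :> R.
  apply: (mulfI s0); rewrite divff // mulrA -expr2 s2 divff //.
case: (I2cases c) => -> /=; rewrite /ex ?cosN ?sinN cD sD /XN /XN' /invsqrt2 /cplx !mxE /=;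
  apply/eqP; rewrite eq_complex /= si; apply/andP; split; apply/eqP.
all: by field.
Qed.

End H.

Lemma not_both (R : realType) N (phi' : 'I_N.-1 -> R) (K : {set 'I_N.-1}) (m : int) :
  \sum_(j < N.-1) phi' j = pi / 2 + m%:~R * (2 * pi) ->
  ~ (good_subset phi' K /\ good_subset phi' (~: K)).
Proof.
move=> hm [[k hk] [k' hk']].
have e : \sum_(j < N.-1) phi' j = \sum_(j in K) phi' j + \sum_(j in ~: K) phi' j.
  rewrite (bigID (mem K)) /=; congr (_ + _); apply: eq_bigl => j; by rewrite inE.
rewrite e hk hk' in hm.
have : ((k + k' - m * 2)%:~R * 2 : R) = 1.
  have pi0 : pi != 0 :> R by rewrite gt_eqF // pi_gt0.
  apply: (mulIf pi0). rewrite mul1r !rmorphD /= rmorphN /= rmorphM /=.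
  transitivity (2 * (k%:~R * pi + k'%:~R * pi) - m%:~R * (2 * pi) * 2 :> R); first ring.
  by rewrite hm; field.
move=> h1.
have h2 : ((k + k' - m * 2) * 2)%:~R = (1%:~R : R) by rewrite rmorphM /= h1.
move/eqP: h2; rewrite eqr_int => /eqP.
lia.
Qed.

Lemma count_part n (P : {set 'I_n.+1} -> Prop) :
  (forall K, ~ (P K /\ P (~: K))) ->
  forall S : {set {set 'I_n.+1}}, (forall K, K \in S -> P K) -> (#|S| <= 2 ^ n)%N.
Proof.
move=> hP S hS.
pose T := [set ~: K | K in S].
have cT : #|T| = #|S| by rewrite card_imset //; exact: finset.setC_inj.
have dis : S :&: T = finset.set0.
  apply/setP => K; rewrite !inE; apply/negbTE/negP => /andP [h1 /imsetP [K' h2 e]].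
  apply: (hP K'); split; first exact: hS.
  by rewrite -e; apply: hS.
have : (#|S :|: T| <= 2 ^ n.+1)%N.
  have <- : #|powerset [set: 'I_n.+1]| = (2 ^ n.+1)%N by rewrite card_powerset cardsT card_ord.
  apply: subset_leq_card; apply/fintype.subsetP => K _; by rewrite powersetE; apply/fintype.subsetP => y; rewrite inE.
rewrite cardsU dis cards0 subn0 cT expnS; lia.
Qed.

Theorem mainTheorem5 (R : realType) (N : nat) (phi' : 'I_N.-1 -> R) :
  (3 <= N)%N ->
  (exists m : int, \sum_(j < N.-1) phi' j = pi / 2 + m%:~R * (2 * pi)) ->
  (forall K : {set 'I_N.-1}, good_subset phi' K ->
     (exists x, flipped_GHZ R K x != 0) /\
     (forall x, I_CHSH phi' (flipped_GHZ R K) x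
                = cplx (2 * Num.sqrt 2) 0 * flipped_GHZ R K x)) /\
  (forall K : {set 'I_N.-1}, ~ (good_subset phi' K /\ good_subset phi' (~: K))) /\
  (forall S : {set {set 'I_N.-1}},
     (forall K, K \in S -> good_subset phi' K) -> (#|S| <= 2 ^ (N - 2))%N).
Proof.
case: N phi' => [|[|[|n]]] phi' //= _ [m hm].
split; first exact: (part1 _ _ _ _ hm).
split; first by move=> K; exact: (not_both R n.+3 phi' K m hm).
move=> S hS.
have := count_part n.+1 (good_subset phi') (fun K => not_both R n.+3 phi' K m hm) S hS.
by rewrite -[(n.+3 - 2)%N]/(n.+1).
Qed.
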